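(* Let $G$ be a looped simple graph. (a) No element of $M[IAS(G)]$ is a coloop. (b) Two distinct elements of $M[IAS(G)]$ are in series if and only if they are the two non-loop elements of the vertex triple $\tau_G(v)$ of an isolated vertex $v$ of $G$ (and in that case they are also parallel).
   Context: A looped simple graph is a finite graph in which each vertex carries at most one loop and no two distinct vertices are joined by more than one edge; ''neighbors'' are distinct vertices joined by a non-loop edge, and a vertex is isolated if it has no neighbors (it may be looped). $A(G)$ is the $V(G)\times V(G)$ matrix over $GF(2)$ with diagonal entry $1$ exactly at looped vertices and off-diagonal entry $1$ exactly for adjacent pairs. $IAS(G)=(I\mid A(G)\mid A(G)+I)$ over $GF(2)$, rows indexed by $V(G)$; the $v$-columns of the three blocks are labelled $\phi_G(v),\chi_G(v),\psi_G(v)$. $M[IAS(G)]$ is the binary column matroid of $IAS(G)$ on $W(G)=\{\phi_G(v),\chi_G(v),\psi_G(v):v\in V(G)\}$, and $\tau_G(v)=\{\phi_G(v),\chi_G(v),\psi_G(v)\}$. A loop is an element in no basis; a coloop is an element in every basis. Two non-loop elements are parallel if they form a $2$-element circuit. Two non-coloop elements are in series if no basis excludes both of them (coloops are all considered in series with one another). *)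

(* Defs.v *)
From HB Require Import structures.
From mathcomp Require Import all_boot all_order all_algebra.
Set Implicit Arguments. Unset Strict Implicit. Unset Printing Implicit Defensive.
Import GRing.Theory.
Local Open Scope ring_scope.

(* A looped simple graph on the finite vertex type V is given by a symmetric
   boolean relation adj : rel V; adj v v means v carries a loop, and for
   u != v, adj u v means u and v are neighbors. *)
Definition looped_simple_graph (V : finType) (adj : rel V) : Prop :=
  symmetric adj.

Definition elt (V : finType) := (V * 'I_3)%type.
Definition phiG (V : finType) (v : V) : elt V := (v, 0%R : 'I_3).
Definition chiG (V : finType) (v : V) : elt V := (v, 1%R : 'I_3).
Definition psiG (V : finType) (v : V) : elt V := (v, 2%R : 'I_3).
Definition tauG (V : finType) (v : V) : {set elt V} :=
  [set phiG v; chiG v; psiG v].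

Definition adjmx (V : finType) (adj : rel V) (u v : V) : 'F_2 := (adj u v)%:R.

Definition IAS_col (V : finType) (adj : rel V) (w : elt V) (u : V) : 'F_2 :=
  let v := w.1 in
  if val w.2 == 0%N then (u == v)%:R
  else if val w.2 == 1%N then adjmx adj u v
  else adjmx adj u v + (u == v)%:R.

Definition indep (V : finType) (adj : rel V) (S : {set elt V}) : Prop :=
  forall c : elt V -> 'F_2,
    (forall u : V, \sum_(w in S) c w * IAS_col adj w u = 0) ->
    forall w, w \in S -> c w = 0.

Definition is_basis (V : finType) (adj : rel V) (B : {set elt V}) : Prop :=
  indep adj B /\ forall T : {set elt V}, B \subset T -> indep adj T -> T = B.

Definition is_circuit (V : finType) (adj : rel V) (C : {set elt V}) : Prop :=
  ~ indep adj C /\ forall D : {set elt V}, D \proper C -> indep adj D.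

Definition mloop (V : finType) (adj : rel V) (x : elt V) : Prop :=
  forall B, is_basis adj B -> x \notin B.

Definition coloop (V : finType) (adj : rel V) (x : elt V) : Prop :=
  forall B, is_basis adj B -> x \in B.

Definition parallel (V : finType) (adj : rel V) (x y : elt V) : Prop :=
  ~ mloop adj x /\ ~ mloop adj y /\ is_circuit adj [set x; y] /\ #|[set x; y]| = 2%N.

Definition in_series (V : finType) (adj : rel V) (x y : elt V) : Prop :=
  (coloop adj x /\ coloop adj y) \/
  (~ coloop adj x /\ ~ coloop adj y /\
   forall B, is_basis adj B -> x \in B \/ y \in B).

Definition isolated (V : finType) (adj : rel V) (v : V) : Prop :=
  forall u : V, u != v -> ~~ adj v u.

(* Main.v *)
Require Import Defs.
From mathcomp Require Import all_boot all_order all_algebra.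
From Stdlib Require Import Classical.
Set Implicit Arguments. Unset Strict Implicit. Unset Printing Implicit Defensive.
Import GRing.Theory.
Local Open Scope ring_scope.

Lemma f2_cases (x : 'F_2) : x = 0 \/ x = 1.
Proof. case: x => [[|[|]]] // H. by left; apply/val_inj. by right; apply/val_inj. Qed.
Lemma f2xx (x : 'F_2) : x + x = 0.
Proof. by case: (f2_cases x) => ->; apply/val_inj. Qed.
Lemma f2_10 : (1 : 'F_2) <> 0. Proof. by move/(congr1 val). Qed.
Lemma f2_sub (a b : 'F_2) : a + b = 0 -> a = b.
Proof. by move=> H; rewrite -[a]addr0 -(f2xx b) addrA H add0r. Qed.

Definition ev (V : finType) (t : V) : V -> 'F_2 := fun u => (u == t)%:R.

Definition inspan (V : finType) (adj : rel V) (S : {set elt V}) (f : V -> 'F_2) :=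
  exists d : elt V -> 'F_2, forall u, f u = \sum_(w in S) d w * IAS_col adj w u.

Section Span.
Lemma span_ext (V : finType) (adj : rel V) (S : {set elt V}) (f g : V -> 'F_2) :
  (forall u, f u = g u) -> inspan adj S f -> inspan adj S g.
Proof. move=> E [d Hd]; exists d => u; by rewrite -E. Qed.

Lemma span0 (V : finType) (adj : rel V) (S : {set elt V}) : inspan adj S (fun _ => 0).
Proof. exists (fun _ => 0) => u; by rewrite big1 // => w _; rewrite mul0r. Qed.

Lemma span_col (V : finType) (adj : rel V) (S : {set elt V}) s : s \in S -> inspan adj S (IAS_col adj s).
Proof.
move=> Hs; exists (fun w => (w == s)%:R) => u.
rewrite (bigD1 s) //= eqxx mul1r big1 ?addr0 // => w /andP [_ /negbTE ->].
by rewrite mul0r.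
Qed.

Lemma spanD (V : finType) (adj : rel V) (S : {set elt V}) f g :
  inspan adj S f -> inspan adj S g -> inspan adj S (fun u => f u + g u).
Proof.
move=> [d Hd] [d' Hd']; exists (fun w => d w + d' w) => u.
by rewrite Hd Hd' -big_split /=; apply: eq_bigr => w _; rewrite mulrDl.
Qed.

Lemma spanZ (V : finType) (adj : rel V) (S : {set elt V}) a f :
  inspan adj S f -> inspan adj S (fun u => a * f u).
Proof.
move=> [d Hd]; exists (fun w => a * d w) => u.
by rewrite Hd mulr_sumr; apply: eq_bigr => w _; rewrite mulrA.
Qed.

Lemma span_sum (V : finType) (adj : rel V) (S : {set elt V}) (I : eqType) (r : seq I) (P : pred I)
  (F : I -> V -> 'F_2) :
  (forall i, P i -> inspan adj S (F i)) ->
  inspan adj S (fun u => \sum_(i <- r | P i) F i u).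
Proof.
move=> H; elim: r => [|i r IH].
  by apply: span_ext (span0 adj S) => u; rewrite big_nil.
case Pi: (P i).
  apply: span_ext (spanD (H i Pi) IH) => u; by rewrite big_cons Pi.
by apply: span_ext IH => u; rewrite big_cons Pi.
Qed.

Lemma ev_decomp (V : finType) (f : V -> 'F_2) u : f u = \sum_t f t * ev t u.
Proof.
rewrite (bigD1 u) //= /ev eqxx mulr1 big1 ?addr0 // => t /negbTE.
by rewrite eq_sym => ->; rewrite mulr0.
Qed.

Lemma span_all (V : finType) (adj : rel V) (S : {set elt V}) f :
  (forall t, inspan adj S (ev t)) -> inspan adj S f.
Proof.
move=> H; have := @span_sum _ adj S _ (index_enum V) predT (fun t u => f t * ev t u) (fun t _ => @spanZ _ adj S (f t) _ (H t)).
by apply: span_ext => u; rewrite -ev_decomp.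
Qed.

Lemma span_trans (V : finType) (adj : rel V) (S S' : {set elt V}) f :
  (forall s, s \in S' -> inspan adj S (IAS_col adj s)) -> inspan adj S' f -> inspan adj S f.
Proof.
move=> H [d Hd].
have := @span_sum _ adj S _ (index_enum _) (fun w => w \in S') (fun w u => d w * IAS_col adj w u) (fun w Hw => @spanZ _ adj S (d w) _ (H w Hw)).
by apply: span_ext => u; rewrite Hd.
Qed.
End Span.

Lemma basis_of (V : finType) (adj : rel V) (B : {set elt V}) :
  indep adj B -> (forall t, inspan adj B (ev t)) -> is_basis adj B.
Proof.
move=> HB Hsp; split => // T sBT HT.
apply/eqP; rewrite eqEsubset sBT andbT; apply/subsetP => w wT.
apply/negPn/negP => wB.
have [d Hd] := span_all (IAS_col adj w) Hsp.
pose c w' := if w' == w then 1 else if w' \in B then d w' else 0.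
suff Hs : forall u, \sum_(w0 in T) c w0 * IAS_col adj w0 u = 0.
  by have := HT c Hs w wT; rewrite /c eqxx; exact: f2_10.
move=> u; rewrite (bigD1 w) //= /c eqxx mul1r.
rewrite (eq_bigr (fun w' => if w' \in B then d w' * IAS_col adj w' u else 0)).
  rewrite -big_mkcondr /=.
  rewrite (eq_bigl (fun w' => w' \in B)); first by rewrite -Hd f2xx.
  move=> w'; case w'B: (w' \in B); last by rewrite andbF.
  rewrite (subsetP sBT) //= andbT; apply/eqP => E; by rewrite -E w'B in wB.
move=> w' /andP [_ /negbTE ->]; by case: (w' \in B); rewrite ?mul0r.
Qed.

Definition indepb (V : finType) (adj : rel V) (S : {set elt V}) : bool :=
  [forall c : {ffun elt V -> 'F_2},
     [forall u, \sum_(w in S) c w * IAS_col adj w u == 0] ==>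
     [forall w in S, c w == 0]].

Lemma indepP (V : finType) (adj : rel V) (S : {set elt V}) : reflect (indep adj S) (indepb adj S).
Proof.
apply: (iffP forallP) => H.
  move=> c Hc w wS.
  have := H (finfun c); move/implyP.
  have -> : [forall u, \sum_(w in S) finfun c w * IAS_col adj w u == 0].
    apply/forallP => u; apply/eqP; rewrite (eq_bigr (fun w => c w * IAS_col adj w u)) ?Hc // => w' _; by rewrite ffunE.
  move=> /(_ isT) /forallP /(_ w) /implyP /(_ wS) /eqP; by rewrite ffunE.
move=> c; apply/implyP => /forallP Hc; apply/forallP => w; apply/implyP => wS.
by apply/eqP; apply: H wS => u; apply/eqP.
Qed.

Lemma exists_basis (V : finType) (adj : rel V) (I S : {set elt V}) :
  I \subset S -> indep adj I -> (forall t, inspan adj S (ev t)) ->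
  exists B : {set elt V}, I \subset B /\ B \subset S /\ is_basis adj B.
Proof.
move=> sIS HI Hsp.
pose P := fun B : {set elt V} => [&& I \subset B, B \subset S & indepb adj B].
have PI : P I by rewrite /P subxx sIS; apply/indepP.
case: (@arg_maxnP _ I P (fun B : {set elt V} => #|B|) PI) => B /and3P [sIB sBS /indepP HB] maxB.
exists B; split => //; split => //; apply: basis_of => // t.
apply: span_trans (Hsp t) => s sS.
case sB: (s \in B); first by apply: span_col.
have notind : ~ indep adj (s |: B).
  move=> Hi; have := maxB (s |: B); rewrite /P subsetU ?sIB ?orbT //=.
  rewrite subUset sBS sub1set sS /=.
  move=> /(_ (introT (indepP _ _) Hi)); by rewrite cardsU1 sB ltnn.
have [c [Hc [w [wB cw]]]] : exists c : elt V -> 'F_2,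
   (forall u, \sum_(w in s |: B) c w * IAS_col adj w u = 0) /\
   exists w, w \in s |: B /\ c w <> 0.
  apply: NNPP => N; apply: notind => c Hc w wB; apply: NNPP => cw.
  by apply: N; exists c; split => //; exists w.
have Hsplit u : \sum_(w in s |: B) c w * IAS_col adj w u =
   c s * IAS_col adj s u + \sum_(w in B) c w * IAS_col adj w u.
  by rewrite big_setU1 //= sB.
case: (f2_cases (c s)) => cs.
  exfalso; have HB0 : forall u, \sum_(w in B) c w * IAS_col adj w u = 0.
    by move=> u; have := Hc u; rewrite Hsplit cs mul0r add0r.
  move: wB; rewrite in_setU1 => /orP [/eqP ws|wB]; first by apply: cw; rewrite ws.
  by apply: cw; apply: HB wB.
exists c => u; apply: f2_sub; by have := Hc u; rewrite Hsplit cs mul1r.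
Qed.

Lemma col_phi (V : finType) (adj : rel V) t u : IAS_col adj (phiG t) u = ev t u.
Proof. by []. Qed.
Lemma col_chi (V : finType) (adj : rel V) t u : IAS_col adj (chiG t) u = adjmx adj u t.
Proof. by []. Qed.
Lemma col_psi (V : finType) (adj : rel V) t u :
  IAS_col adj (psiG t) u = adjmx adj u t + ev t u.
Proof. by []. Qed.

Lemma I3_cases (i : 'I_3) : i = 0%R \/ i = 1%R \/ i = 2%R.
Proof.
case: i => [[|[|[|]]]] // H.
- by left; apply/val_inj.
- by right; left; apply/val_inj.
- by right; right; apply/val_inj.
Qed.

Lemma elt_cases (V : finType) (w : elt V) :
  w = phiG w.1 \/ w = chiG w.1 \/ w = psiG w.1.
Proof.
case: w => t i /=; rewrite /phiG /chiG /psiG.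
by case: (I3_cases i) => [->|[->|->]]; auto.
Qed.

Lemma inTau (V : finType) (w : elt V) t : w \in tauG t <-> w.1 = t.
Proof.
rewrite /tauG !inE; split.
  by move=> /orP [/orP [/eqP->|/eqP->]|/eqP->].
move=> E; case: (elt_cases w) => [->|[->|->]]; rewrite E eqxx ?orbT //.
Qed.

Lemma phi_chi (V : finType) (t : V) : phiG t != chiG t.
Proof. by apply/eqP => /(congr1 (fun w => val w.2)). Qed.
Lemma phi_psi (V : finType) (t : V) : phiG t != psiG t.
Proof. by apply/eqP => /(congr1 (fun w => val w.2)). Qed.
Lemma chi_psi (V : finType) (t : V) : chiG t != psiG t.
Proof. by apply/eqP => /(congr1 (fun w => val w.2)). Qed.

Lemma ev_ne (V : finType) (t u : V) : u != t -> ev t u = 0.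
Proof. by rewrite /ev => /negbTE ->. Qed.
Lemma ev_eq (V : finType) (t : V) : ev t t = 1.
Proof. by rewrite /ev eqxx. Qed.

Lemma no_coloop (V : finType) (adj : rel V) x : ~ coloop adj x.
Proof.
pose S := [set w | w != x].
have Hsp : forall t, inspan adj S (ev t).
  move=> t; case Hp: (phiG t == x).
    have Hc : chiG t \in S by rewrite inE -(eqP Hp) eq_sym phi_chi.
    have Hs : psiG t \in S by rewrite inE -(eqP Hp) eq_sym phi_psi.
    apply: (span_ext _ (spanD (span_col adj Hc) (span_col adj Hs))) => u.
    by rewrite col_chi col_psi addrA f2xx add0r.
  have Hph : phiG t \in S by rewrite inE Hp.
  by apply: (span_ext _ (span_col adj Hph)) => u.
have H0 : indep adj set0 by move=> c _ w; rewrite inE.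
have [B [_ [sBS HB]]] := exists_basis (sub0set S) H0 Hsp.
move=> /(_ B HB) xB; have := subsetP sBS x xB; by rewrite inE eqxx.
Qed.

Lemma zero_mloop (V : finType) (adj : rel V) x :
  (forall u, IAS_col adj x u = 0) -> mloop adj x.
Proof.
move=> H0 B [HB _]; apply/negP => xB.
pose c w := if w == x then 1 else 0 : 'F_2.
suff Hs : forall u, \sum_(w in B) c w * IAS_col adj w u = 0.
  by have := HB c Hs x xB; rewrite /c eqxx; exact: f2_10.
move=> u; rewrite big1 // => w _; rewrite /c; case: eqP => [->|_].
  by rewrite H0 mulr0.
by rewrite mul0r.
Qed.

Lemma nonzero_not_mloop (V : finType) (adj : rel V) x t :
  IAS_col adj x t = 1 -> ~ mloop adj x.
Proof.
move=> Ht Hl.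
have Hsp : forall t, inspan adj [set: elt V] (ev t).
  by move=> t'; apply: (span_ext _ (span_col adj (in_setT (phiG t')))) => u.
have Hi : indep adj [set x].
  move=> c Hc w; rewrite inE => /eqP ->.
  by have := Hc t; rewrite big_set1 Ht mulr1.
have [B [sxB [_ HB]]] := exists_basis (subsetT _) Hi Hsp.
by have := Hl B HB; rewrite (subsetP sxB) // inE.
Qed.

Lemma iso_col (V : finType) (adj : rel V) (hsym : symmetric adj) t w u :
  isolated adj t -> w.1 = t -> IAS_col adj w u = if u == t then IAS_col adj w t else 0.
Proof.
move=> Hi Hw; case: eqP => [->|/eqP ut] //.
have Ha : adjmx adj u t = 0 by rewrite /adjmx hsym (negbTE (Hi u ut)).
move: (elt_cases w); rewrite Hw.
move=> [->|[->|->]];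
  rewrite ?col_phi ?col_chi ?col_psi ?Ha ?ev_ne ?addr0 //.
Qed.

Lemma span_iso (V : finType) (adj : rel V) (hsym : symmetric adj) (S : {set elt V}) t z :
  isolated adj t -> z.1 = t -> z \in S -> IAS_col adj z t = 1 -> inspan adj S (ev t).
Proof.
move=> Hi Hz zS Ha; apply: (span_ext _ (span_col adj zS)) => u.
by rewrite (iso_col hsym u Hi Hz) Ha /ev; case: (u == t).
Qed.

Lemma a_sum (V : finType) (adj : rel V) t :
  IAS_col adj (phiG t) t + IAS_col adj (chiG t) t + IAS_col adj (psiG t) t = 0.
Proof.
rewrite col_phi col_chi col_psi ev_eq.
by case: (f2_cases (adjmx adj t t)) => ->; apply/val_inj.
Qed.

Lemma three_distinct (V : finType) (adj : rel V) t (p q r : elt V) :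
  p.1 = t -> q.1 = t -> r.1 = t -> p != q -> q != r -> p != r ->
  IAS_col adj p t + IAS_col adj q t + IAS_col adj r t = 0.
Proof.
move=> Hp Hq Hr.
move: (elt_cases p) (elt_cases q) (elt_cases r); rewrite Hp Hq Hr.
move=> [->|[->|->]] [->|[->|->]] [->|[->|->]] H1 H2 H3;
  rewrite ?eqxx in H1 H2 H3 => //;
  rewrite col_phi col_chi col_psi ev_eq;
  by case: (f2_cases (adjmx adj t t)) => ->; apply/val_inj.
Qed.

Lemma pigeon (V : finType) (x y a b c : elt V) :
  a != b -> b != c -> a != c ->
  (a == x) || (a == y) -> (b == x) || (b == y) -> (c == x) || (c == y) -> False.
Proof.
move=> ab bc ac /orP [/eqP Ea|/eqP Ea] /orP [/eqP Eb|/eqP Eb] /orP [/eqP Ec|/eqP Ec];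
  subst; by rewrite ?eqxx in ab bc ac.
Qed.

Lemma two_out (V : finType) (x y a b : elt V) t :
  a != b -> a.1 = t -> b.1 = t ->
  (a == x) || (a == y) -> (b == x) || (b == y) -> x.1 = t /\ y.1 = t.
Proof.
move=> ab Ha Hb /orP [/eqP Ea|/eqP Ea] /orP [/eqP Eb|/eqP Eb].
- by subst; rewrite eqxx in ab.
- by subst.
- by subst.
- by subst; rewrite eqxx in ab.
Qed.

Definition Sxy (V : finType) (x y : elt V) : {set elt V} := [set w | (w != x) && (w != y)].

Lemma notin_Sxy (V : finType) (x y w : elt V) : (w \notin Sxy x y) = (w == x) || (w == y).
Proof. by rewrite /Sxy inE negb_and !negbK. Qed.


Lemma noniso_span (V : finType) (adj : rel V) (x y : elt V) t :
  x.1 = t -> y.1 = t -> ~ isolated adj t -> inspan adj (Sxy x y) (ev t).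
Proof.
move=> Hx Hy Hi.
have [w [wt atw]] : exists w, w != t /\ adj t w.
  apply: NNPP => N; apply: Hi => u ut; apply/negP => a; apply: N; by exists u; split.
have out e : e.1 != t -> e \in Sxy x y.
  move=> et; rewrite /Sxy inE; apply/andP; split; apply/eqP => E;
  by rewrite E ?Hx ?Hy eqxx in et.
have Hcw : chiG w \in Sxy x y by apply: out.
have Hphi : forall r, r != t -> inspan adj (Sxy x y) (fun u => adjmx adj r w * ev r u).
  move=> r rt; apply: spanZ; exact: (span_ext _ (span_col adj (out (phiG r) rt))).
have := spanD (span_col adj Hcw) (@span_sum _ adj (Sxy x y) _ (index_enum V) (fun r => r != t) (fun r u => adjmx adj r w * ev r u) Hphi).
apply: span_ext => u.
have E : adjmx adj u w = \sum_r adjmx adj r w * ev r u := ev_decomp (fun r => adjmx adj r w) u.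
have At : adjmx adj t w = 1 by rewrite /adjmx atw.
rewrite col_chi E (bigD1 t) //= At mul1r -addrA f2xx addr0 //.
Qed.

Lemma key (V : finType) (adj : rel V) (hsym : symmetric adj) (x y : elt V) t :
  x != y ->
  inspan adj (Sxy x y) (ev t) \/
  (isolated adj t /\ x.1 = t /\ y.1 = t /\ IAS_col adj x t = 1 /\ IAS_col adj y t = 1).
Proof.
move=> xy; set S := Sxy x y.
case Hp: (phiG t \in S).
  by left; apply: (span_ext _ (span_col adj Hp)).
case Hc: (chiG t \in S); case Hs: (psiG t \in S).
- left; apply: (span_ext _ (spanD (span_col adj Hc) (span_col adj Hs))) => u.
  by rewrite col_chi col_psi addrA f2xx add0r.
- have [Hx1 Hy1] : x.1 = t /\ y.1 = t.
    apply: (two_out (a := phiG t) (b := psiG t)) => //; first exact: phi_psi.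
    1,2: by rewrite -notin_Sxy -/S ?Hp ?Hc ?Hs.
  case: (classic (isolated adj t)) => Hi; last by left; apply: noniso_span.
  case: (f2_cases (IAS_col adj (chiG t) t)) => Ha; last first.
    by left; apply: (span_iso hsym Hi _ Hc Ha).
  have Hb : IAS_col adj (psiG t) t = 1.
    have := a_sum adj t; rewrite col_phi ev_eq.
    by rewrite Ha addr0 => /f2_sub <-.
  have Hall : forall e, e.1 = t -> e \notin S -> IAS_col adj e t = 1.
    move=> e He eS; move: (elt_cases e); rewrite He.
    move=> [E|[E|E]]; rewrite E in eS *.
    - by rewrite col_phi ev_eq.
    - by move: eS; rewrite ?Hc ?Hs ?Hb.
    - by move: eS; rewrite ?Hc ?Hs ?Hb.
  right; do 3!(split => //); split; apply: Hall => //; by rewrite notin_Sxy eqxx ?orbT.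
- have [Hx1 Hy1] : x.1 = t /\ y.1 = t.
    apply: (two_out (a := phiG t) (b := chiG t)) => //; first exact: phi_chi.
    1,2: by rewrite -notin_Sxy -/S ?Hp ?Hc ?Hs.
  case: (classic (isolated adj t)) => Hi; last by left; apply: noniso_span.
  case: (f2_cases (IAS_col adj (psiG t) t)) => Ha; last first.
    by left; apply: (span_iso hsym Hi _ Hs Ha).
  have Hb : IAS_col adj (chiG t) t = 1.
    have := a_sum adj t; rewrite col_phi ev_eq.
    by rewrite Ha addr0 => /f2_sub <-.
  have Hall : forall e, e.1 = t -> e \notin S -> IAS_col adj e t = 1.
    move=> e He eS; move: (elt_cases e); rewrite He.
    move=> [E|[E|E]]; rewrite E in eS *.
    - by rewrite col_phi ev_eq.
    - by rewrite ?Hs ?Hc in eS.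
    - by rewrite ?Hs ?Hc in eS.
  right; do 3!(split => //); split; apply: Hall => //; by rewrite notin_Sxy eqxx ?orbT.
- exfalso; apply: (@pigeon _ x y _ _ _ (phi_chi t) (chi_psi t) (phi_psi t)).
  1-3: by rewrite -notin_Sxy -/S ?Hp ?Hc ?Hs.
Qed.

Lemma iso_one (V : finType) (adj : rel V) (hsym : symmetric adj) x v :
  isolated adj v -> x.1 = v -> ~ mloop adj x -> IAS_col adj x v = 1.
Proof.
move=> Hi Hx nx; case: (f2_cases (IAS_col adj x v)) => H //.
exfalso; apply: nx; apply: zero_mloop => u.
by rewrite (iso_col hsym u Hi Hx) H; case: (u == v).
Qed.

Lemma series_rev (V : finType) (adj : rel V) (hsym : symmetric adj) x y v :
  isolated adj v -> x.1 = v -> y.1 = v -> x != y -> ~ mloop adj x -> ~ mloop adj y ->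
  forall B, is_basis adj B -> x \in B \/ y \in B.
Proof.
move=> Hi Hx Hy xy nx ny.
have ax := iso_one hsym Hi Hx nx; have ay := iso_one hsym Hi Hy ny.
move=> B [HB Hmax]; apply: NNPP => N.
have xB : x \notin B by apply/negP => xB; apply: N; left.
have H0 : forall b, b \in B -> IAS_col adj b v = 0.
  move=> b bB.
  have xb : x != b by apply/eqP => E; rewrite E bB in xB.
  have yb : y != b by apply/eqP => E; apply: N; right; rewrite E.
  case: (eqVneq b.1 v) => Hb.
    have := three_distinct adj Hx Hy Hb xy yb xb.
    by rewrite ax ay f2xx add0r.
  have Ha : adjmx adj v b.1 = 0 by rewrite /adjmx (negbTE (Hi _ Hb)).
  have He : ev b.1 v = 0 by rewrite ev_ne // eq_sym.
  move: (elt_cases b) => [E|[E|E]]; rewrite E ?col_phi ?col_chi ?col_psi ?Ha ?He //.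
  by rewrite addr0.
have Hind : indep adj (x |: B).
  move=> c Hc w.
  have Hs u : \sum_(w in x |: B) c w * IAS_col adj w u =
      c x * IAS_col adj x u + \sum_(w in B) c w * IAS_col adj w u.
    by rewrite big_setU1.
  have cx : c x = 0.
    have := Hc v; rewrite Hs ax mulr1 big1 ?addr0 // => b bB.
    by rewrite H0 // mulr0.
  have HB0 : forall u, \sum_(w in B) c w * IAS_col adj w u = 0.
    by move=> u; have := Hc u; rewrite Hs cx mul0r add0r.
  rewrite in_setU1 => /orP [/eqP -> // | wB]; exact: HB HB0 w wB.
have E := Hmax (x |: B) (subsetUr _ _) Hind.
by move: xB; rewrite -E setU11.
Qed.

Lemma par_lem (V : finType) (adj : rel V) (hsym : symmetric adj) x y v :
  isolated adj v -> x.1 = v -> y.1 = v -> x != y -> ~ mloop adj x -> ~ mloop adj y ->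
  parallel adj x y.
Proof.
move=> Hi Hx Hy xy nx ny.
have ax := iso_one hsym Hi Hx nx; have ay := iso_one hsym Hi Hy ny.
have cx u : IAS_col adj x u = ev v u by rewrite (iso_col hsym u Hi Hx) ax /ev; case: (u == v).
have cy u : IAS_col adj y u = ev v u by rewrite (iso_col hsym u Hi Hy) ay /ev; case: (u == v).
have Hxy : forall w, w \in [set x; y] -> IAS_col adj w v = 1.
  by move=> w; rewrite !inE => /orP [/eqP->|/eqP->].
split => //; split => //; split; last by rewrite cards2 xy.
split.
  move=> Hind.
  have Hs : forall u, \sum_(w in [set x; y]) (fun _ => 1 : 'F_2) w * IAS_col adj w u = 0.
    by move=> u; rewrite big_setU1 ?inE //= big_set1 !mul1r cx cy f2xx.
  by have := Hind _ Hs x (setU11 _ _); apply: f2_10.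
move=> D /properP [sD [w0 w0xy w0D]] c Hc z zD.
have zxy := subsetP sD z zD.
have ED : D = [set z].
  apply/setP => d; rewrite inE; apply/idP/eqP => [dD|->//].
  case: (eqVneq d z) => // dz; exfalso.
  have dxy := subsetP sD d dD.
  have dw : d != w0 by apply/eqP => E; rewrite -E dD in w0D.
  have zw : z != w0 by apply/eqP => E; rewrite -E zD in w0D.
  move: dxy zxy w0xy; rewrite !inE.
  exact: (@pigeon _ x y d z w0 dz zw dw).
rewrite ED in Hc; by have := Hc v; rewrite big_set1 Hxy // mulr1 => ->.
Qed.

Theorem proposition9p1 (V : finType) (adj : rel V) :
  looped_simple_graph adj ->
  (forall x : elt V, ~ coloop adj x) /\
  (forall x y : elt V, x <> y ->
     (in_series adj x y <->
      exists v : V, isolated adj v /\ x \in tauG v /\ y \in tauG v /\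
                    ~ mloop adj x /\ ~ mloop adj y) /\
     ((exists v : V, isolated adj v /\ x \in tauG v /\ y \in tauG v /\
                    ~ mloop adj x /\ ~ mloop adj y) -> parallel adj x y)).
Proof.
move=> hsym; split; first exact: no_coloop.
move=> x y xy0; have xy : x != y by apply/eqP.
split; last first.
  move=> [v [Hi [/inTau Hx [/inTau Hy [nx ny]]]]].
  exact: (par_lem hsym Hi Hx Hy xy nx ny).
split.
  case => [[cx _]|[_ [_ Hser]]]; first by exfalso; apply: (no_coloop cx).
  case: (classic (forall t, inspan adj (Sxy x y) (ev t))) => Hall.
    exfalso.
    have H0 : indep adj set0 by move=> c _ w; rewrite inE.
    have [B [_ [sB HB]]] := exists_basis (sub0set _) H0 Hall.
    by case: (Hser B HB) => Hin; have := subsetP sB _ Hin; rewrite /Sxy inE eqxx ?andbF.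
  have [t Ht] : exists t, ~ inspan adj (Sxy x y) (ev t).
    by apply: NNPP => N; apply: Hall => t; apply: NNPP => Nt; apply: N; exists t.
  case: (key hsym t xy) => [//|[Hi [Hx [Hy [ax ay]]]]].
  exists t; split => //; split; first by apply/inTau.
  split; first by apply/inTau.
  by split; [exact: (nonzero_not_mloop ax) | exact: (nonzero_not_mloop ay)].
move=> [v [Hi [/inTau Hx [/inTau Hy [nx ny]]]]]; right.
split; first exact: no_coloop.
split; first exact: no_coloop.
exact: (series_rev hsym Hi Hx Hy xy nx ny).
Qed.
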